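(* Let $\mathbb{E}$ be a finite-dimensional Euclidean space, $\mathcal{K}\subseteq\mathbb{E}$ a closed convex cone, $\mathcal{A}:\mathbb{E}\to\mathbb{R}^m$ a surjective linear map and $b\in\mathbb{R}^m$, and let $\mathcal{F}=\{x\in\mathcal{K}:\mathcal{A}x=b\}\neq\emptyset$. Let $\bar x$ be an extreme point of $\mathcal{F}$. Then $\dim\operatorname{face}(\bar x,\mathcal{K})\le m-\operatorname{ips}(\mathcal{F})$.
   Context: $\operatorname{face}(\bar x,\mathcal{K})$ is the minimal face of $\mathcal{K}$ containing $\bar x$. Strict feasibility of $\{x\in C:\mathcal{A}x=b\}$ with respect to a closed convex cone $C$ means that this set contains a point of $\operatorname{relint}(C)$. For a cone $C$, $C^*$ is its dual cone and $C^\perp$ its orthogonal complement. Facial reduction process: set $\mathcal{K}^0=\mathcal{K}$, $k=0$; while strict feasibility fails for $\{x\in\mathcal{K}^k:\mathcal{A}x=b\}$ with respect to $\mathcal{K}^k$, increase $k$ by one, choose $y^k\in\mathbb{R}^m$ with $\mathcal{A}^*y^k\in(\mathcal{K}^{k-1})^*\setminus(\mathcal{K}^{k-1})^\perp$ and $\langle b,y^k\rangle=0$, and set $\mathcal{K}^k=\mathcal{K}^{k-1}\cap(\mathcal{A}^*y^k)^\perp$. Let $\bar{\mathcal{K}}=\mathcal{K}\cap(\mathcal{A}^*y^1)^\perp\cap\cdots\cap(\mathcal{A}^*y^k)^\perp$ be the cone at termination. The implicit problem singularity $\operatorname{ips}(\mathcal{F})$ is the number of redundant equalities in the system $\{x\in\bar{\mathcal{K}}:\mathcal{A}x=b\}$,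 i.e. $m$ minus the rank of $\mathcal{A}$ restricted to $\operatorname{span}\bar{\mathcal{K}}$. *)

(* Defs.v *)
From mathcomp Require Import all_boot all_algebra.
From mathcomp Require Import boolp classical_sets reals.
Set Implicit Arguments. Unset Strict Implicit. Unset Printing Implicit Defensive.
Import GRing.Theory Num.Theory.
Local Open Scope ring_scope.
Local Open Scope classical_set_scope.

Section Defs.
Variable R : realType.

(* The Euclidean space E is modelled as R^n (column vectors) with the
   standard inner product. *)
Definition dot (p : nat) (u v : 'cV[R]_p) : R := (u^T *m v) 0 0.
Definition enorm (p : nat) (u : 'cV[R]_p) : R := Num.sqrt (dot u u).

Definition eclosed (n : nat) (C : set 'cV[R]_n) : Prop :=
  forall x, (forall e : R, 0 < e -> exists z, C z /\ enorm (z - x) < e) -> C x.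

Definition convex_set (n : nat) (C : set 'cV[R]_n) : Prop :=
  forall x y (t : R), C x -> C y -> 0 <= t <= 1 -> C (t *: x + (1 - t) *: y).

Definition is_cone (n : nat) (C : set 'cV[R]_n) : Prop :=
  forall x (t : R), C x -> 0 <= t -> C (t *: x).

Definition closed_convex_cone (n : nat) (C : set 'cV[R]_n) : Prop :=
  eclosed C /\ convex_set C /\ is_cone C.

Definition span (n : nat) (S : set 'cV[R]_n) : set 'cV[R]_n :=
  [set z | exists k (M : 'M[R]_(n, k)),
      (forall j, S (col j M)) /\ exists c : 'cV[R]_k, z = M *m c].

Definition dimS (n : nat) (S : set 'cV[R]_n) : nat :=
  \max_(d < n.+1 | `[< exists M : 'M[R]_(n, d),
                        \rank M = d /\ forall j, S (col j M) >]) d.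

Definition is_face (n : nat) (K Fc : set 'cV[R]_n) : Prop :=
  Fc `<=` K /\ convex_set Fc /\
  forall x y (t : R), K x -> K y -> 0 < t < 1 ->
    Fc (t *: x + (1 - t) *: y) -> Fc x /\ Fc y.

(* face(xbar, K): minimal face of K containing xbar (intersection of all
   faces of K containing xbar) *)
Definition minface (n : nat) (K : set 'cV[R]_n) (xbar : 'cV[R]_n) : set 'cV[R]_n :=
  [set z | forall Fc, is_face K Fc -> Fc xbar -> Fc z].

Definition extreme_point (n : nat) (Fs : set 'cV[R]_n) (xbar : 'cV[R]_n) : Prop :=
  Fs xbar /\ forall x y (t : R), Fs x -> Fs y -> 0 < t < 1 ->
    xbar = t *: x + (1 - t) *: y -> x = y.

(* relative interior of a convex cone C (its affine hull is its span) *)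
Definition relint (n : nat) (C : set 'cV[R]_n) : set 'cV[R]_n :=
  [set x | C x /\ exists e : R, 0 < e /\
     forall z, span C z -> enorm (z - x) < e -> C z].

Definition feasible_set (m n : nat) (C : set 'cV[R]_n) (A : 'M[R]_(m, n))
  (b : 'cV[R]_m) : set 'cV[R]_n := [set x | C x /\ A *m x = b].

Definition strictly_feasible (m n : nat) (C : set 'cV[R]_n) (A : 'M[R]_(m, n))
  (b : 'cV[R]_m) : Prop := exists x, relint C x /\ A *m x = b.

Definition dual_cone (n : nat) (C : set 'cV[R]_n) : set 'cV[R]_n :=
  [set y | forall x, C x -> 0 <= dot x y].

Definition orth (n : nat) (C : set 'cV[R]_n) : set 'cV[R]_n :=
  [set y | forall x, C x -> dot x y = 0].

(* K^j = K ∩ (A^* y^1)^⊥ ∩ ... ∩ (A^* y^j)^⊥, with y^(i+1) = nth 0 ys i *)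
Definition FR_cone (m n : nat) (K : set 'cV[R]_n) (A : 'M[R]_(m, n))
  (ys : seq 'cV[R]_m) (j : nat) : set 'cV[R]_n :=
  [set x | K x /\ forall i, (i < j)%N -> dot (A^T *m nth 0 ys i) x = 0].

(* ys = [y^1; ...; y^k] is a run of the facial reduction process,
   terminated (the last cone gives strict feasibility). *)
Definition FR_run (m n : nat) (K : set 'cV[R]_n) (A : 'M[R]_(m, n))
  (b : 'cV[R]_m) (ys : seq 'cV[R]_m) : Prop :=
  (forall i, (i < size ys)%N ->
     ~ strictly_feasible (FR_cone K A ys i) A b /\
     dual_cone (FR_cone K A ys i) (A^T *m nth 0 ys i) /\
     ~ orth (FR_cone K A ys i) (A^T *m nth 0 ys i) /\
     dot b (nth 0 ys i) = 0) /\
  strictly_feasible (FR_cone K A ys (size ys)) A b.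

Definition ips (m n : nat) (K : set 'cV[R]_n) (A : 'M[R]_(m, n))
  (ys : seq 'cV[R]_m) : nat :=
  (m - dimS [set A *m x | x in span (FR_cone K A ys (size ys))])%N.

End Defs.

(* Main.v *)
Require Import Defs.
From mathcomp Require Import all_boot all_algebra.
From mathcomp Require Import boolp classical_sets reals.
From mathcomp Require Import all_order ring lra.
Local Open Scope ring_scope.
Local Open Scope classical_set_scope.
Import Order.TTheory GRing.Theory Num.Theory.

Section Aux.
Variable R : realType.

Lemma colfree_rank (m d : nat) (N : 'M[R]_(m, d)) :
  (forall c : 'cV[R]_d, N *m c = 0 -> c = 0) -> \rank N = d.
Proof.
move=> H; rewrite -mxrank_tr; apply/eqP.
have : row_free N^T.
  rewrite -kermx_eq0; apply/eqP/row_matrixP => i; rewrite row0.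
  have h : row i (kermx N^T) *m N^T = 0 by rewrite -row_mul mulmx_ker row0.
  have h2 : N *m (row i (kermx N^T))^T = 0 by move/(congr1 trmx): h; rewrite trmx_mul trmxK trmx0.
  by rewrite -(trmxK (row i _)) (H _ h2) trmx0.
by [].
Qed.

Lemma rank_colfree (m d : nat) (N : 'M[R]_(m, d)) :
  \rank N = d -> forall c : 'cV[R]_d, N *m c = 0 -> c = 0.
Proof.
move=> rk c h.
have rf : row_free N^T by rewrite /row_free mxrank_tr rk.
have : c^T *m N^T = 0 *m N^T by rewrite -trmx_mul h trmx0 mul0mx.
by move/(row_free_inj rf) => e; rewrite -[c]trmxK e trmx0.
Qed.

Lemma dotC (p : nat) (u v : 'cV[R]_p) : dot u v = dot v u.
Proof.
have e : (u^T *m v)^T = v^T *m u by rewrite trmx_mul trmxK.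
by rewrite /dot -e [in RHS]mxE.
Qed.

Variable n : nat.
Variable K : set 'cV[R]_n.
Hypothesis Kcvx : convex_set K.
Hypothesis Kcone : is_cone K.

Lemma conic {x y} (a b : R) : K x -> K y -> 0 <= a -> 0 <= b -> K (a *: x + b *: y).
Proof.
move=> Kx Ky a0 b0.
have [ab0|abn0] := eqVneq (a + b) 0.
  have a00 : a = 0 by lra.
  have b00 : b = 0 by lra.
  rewrite a00 b00 !scale0r addr0.
  by have := Kcone _ _ Kx (lexx 0); rewrite scale0r.
have abp : 0 < a + b by rewrite lt_neqAle eq_sym abn0 addr_ge0.
have -> : a *: x + b *: y = (a + b) *: ((a / (a + b)) *: x + (1 - a / (a + b)) *: y).
  apply/matrixP => i j; rewrite !mxE; field; exact: abn0.
apply: (Kcone _ _ _ (ltW abp)); apply: Kcvx => //.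
apply/andP; split; first by apply: divr_ge0 => //; exact: ltW.
by rewrite ler_pdivrMr // mul1r lerDl.
Qed.

Lemma Keq {u v} : K u -> u = v -> K v.
Proof. by move=> h <-. Qed.

Variable xbar : 'cV[R]_n.
Hypothesis Kxbar : K xbar.

Definition Hs (d : 'cV[R]_n) : Prop :=
  exists e : R, 0 < e /\ forall s, `|s| <= e -> K (xbar + s *: d).

Definition Gs (z : 'cV[R]_n) : Prop :=
  K z /\ exists e : R, 0 < e /\ K (xbar - e *: z).

Lemma mono (v : 'cV[R]_n) (s : R) : K (xbar + v) -> 0 <= s <= 1 -> K (xbar + s *: v).
Proof.
move=> h /andP[s0 s1].
apply: (Keq (conic (1 - s) (s) Kxbar h _ s0)); first lra.
apply/matrixP => i j; rewrite !mxE; ring.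
Qed.

Lemma Hs0 : Hs 0.
Proof. exists 1; split => // s _; by rewrite scaler0 addr0. Qed.

Lemma HsD d1 d2 : Hs d1 -> Hs d2 -> Hs (d1 + d2).
Proof.
move=> [e1 [e1p h1]] [e2 [e2p h2]].
exists (Num.min e1 e2 / 2); split.
  by apply: divr_gt0 => //; rewrite lt_min e1p e2p.
move=> s hs.
have hm1 : Num.min e1 e2 <= e1 by rewrite ge_min lexx.
have hm2 : Num.min e1 e2 <= e2 by rewrite ge_min lexx orbT.
have hs2 : `|2 * s| <= Num.min e1 e2.
  rewrite normrM ger0_norm //; rewrite ler_pdivlMr // in hs; lra.
have k1 := h1 _ (le_trans hs2 hm1).
have k2 := h2 _ (le_trans hs2 hm2).
have := Kcvx _ _ (1/2) k1 k2.
move=> k; apply: (Keq (k _)); first by apply/andP; split; lra.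
apply/matrixP => i j; rewrite !mxE.
by field.
Qed.

Lemma HsZ c d : Hs d -> Hs (c *: d).
Proof.
move=> [e [ep h]]; exists (e / (`|c| + 1)); split.
  by apply: divr_gt0 => //; apply: ltr_wpDl.
move=> s hs; rewrite scalerA; apply: h.
rewrite normrM; rewrite ler_pdivlMr ?ltr_wpDl // in hs.
have c0 : 0 <= `|c| by [].
have s0 : 0 <= `|s| by [].
nra.
Qed.

Lemma GsHs z : Gs z -> Hs z.
Proof.
move=> [Kz [e [ep h]]]; exists e; split => // s hs.
have [s0|s0] := leP 0 s.
  apply: (Keq (conic (1) (s) Kxbar Kz ler01 s0)).
  by rewrite scale1r.
rewrite ltr0_norm // in hs.
have a0 : 0 <= 1 + s / e.
  have -> : 1 + s / e = (e + s) / e by field; exact: lt0r_neq0.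
  by apply: divr_ge0; lra.
have b0 : 0 <= - s / e by apply: divr_ge0; lra.
apply: (Keq (conic (1 + s / e) (- s / e) Kxbar h a0 b0)).
apply/matrixP => i j; rewrite !mxE; field; exact: lt0r_neq0.
Qed.

Lemma Gs_face : is_face K Gs.
Proof.
split; first by move=> z [].
split.
  move=> z1 z2 t [K1 [e1 [e1p h1]]] [K2 [e2 [e2p h2]]] ht; split; first exact: Kcvx.
  have ep : 0 < Num.min e1 e2 by rewrite lt_min e1p e2p.
  have hm1 : Num.min e1 e2 <= e1 by rewrite ge_min lexx.
  have hm2 : Num.min e1 e2 <= e2 by rewrite ge_min lexx orbT.
  exists (Num.min e1 e2); split => //.
  have g1 : K (xbar - Num.min e1 e2 *: z1).
    have s1 : 0 <= Num.min e1 e2 / e1 <= 1.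
      by apply/andP; split; [apply: divr_ge0; apply: ltW | rewrite ler_pdivrMr // mul1r].
    apply: (Keq (mono (- (e1 *: z1)) (Num.min e1 e2 / e1) h1 s1)).
    apply/matrixP => i j; rewrite !mxE; field; exact: lt0r_neq0.
  have g2 : K (xbar - Num.min e1 e2 *: z2).
    have s2 : 0 <= Num.min e1 e2 / e2 <= 1.
      by apply/andP; split; [apply: divr_ge0; apply: ltW | rewrite ler_pdivrMr // mul1r].
    apply: (Keq (mono (- (e2 *: z2)) (Num.min e1 e2 / e2) h2 s2)).
    apply/matrixP => i j; rewrite !mxE; field; exact: lt0r_neq0.
  apply: (Keq (Kcvx _ _ _ g1 g2 ht)).
  apply/matrixP => i j; rewrite !mxE; ring.
move=> x y t Kx Ky /andP[t0 t1] [_ [e [ep h]]]; split.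
  split => //; exists (e * t); split; first exact: mulr_gt0.
  have b0 : 0 <= e * (1 - t) by apply: mulr_ge0; lra.
  apply: (Keq (conic 1 (e * (1 - t)) h Ky ler01 b0)).
  apply/matrixP => i j; rewrite !mxE; ring.
split => //; exists (e * (1 - t)); split; first by apply: mulr_gt0; lra.
have b0 : 0 <= e * t by apply: mulr_ge0; lra.
apply: (Keq (conic (1) (e * t) h Kx ler01 b0)).
apply/matrixP => i j; rewrite !mxE; ring.
Qed.

Lemma minface_Hs z : minface K xbar z -> Hs z.
Proof.
move=> mz; apply: GsHs; apply: mz; first exact: Gs_face.
split => //; exists (1/2); split; first lra.
have h2 : 0 <= 1/2 :> R by lra.
apply: (Keq (Kcone xbar (1/2) Kxbar h2)).
apply/matrixP => i j; rewrite !mxE; by field.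
Qed.

Lemma span_Hs (S : set 'cV[R]_n) (z : 'cV[R]_n) : (forall y, S y -> Hs y) -> Defs.span S z -> Hs z.
Proof.
move=> hS [k [M [cM [c ->]]]].
have -> : M *m c = \sum_(j < k) c j 0 *: col j M.
  apply/matrixP => i l; rewrite !mxE summxE; apply: eq_bigr => j _.
  by rewrite !mxE (ord1 l) mulrC.
apply: (big_ind Hs Hs0 HsD) => j _; apply: HsZ; exact: hS.
Qed.

End Aux.

Lemma dotDZ (R : realType) (p : nat) (a x y : 'cV[R]_p) (s r : R) :
  dot a (s *: x + r *: y) = s * dot a x + r * dot a y.
Proof. by rewrite /dot mulmxDr -!scalemxAr !mxE. Qed.

Lemma col_cV (R : realType) (p : nat) (v : 'cV[R]_p) (j : 'I_1) : col j v = v.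
Proof. by apply/matrixP => i k; rewrite !mxE !ord1. Qed.

Theorem theorem4p4 (R : realType) (m n : nat) (K : set 'cV[R]_n)
  (A : 'M[R]_(m, n)) (b : 'cV[R]_m) :
  closed_convex_cone K ->
  \rank A = m ->
  feasible_set K A b !=set0 ->
  forall xbar : 'cV[R]_n, extreme_point (feasible_set K A b) xbar ->
  forall ys : seq 'cV[R]_m, FR_run K A b ys ->
  (dimS (minface K xbar) <= m - ips K A ys)%N.
Proof.
move=> [_ [Kcvx Kcone]] _ _ xbar [[Kx Axb] xext] ys [Hys _].
set Kb := FR_cone K A ys (size ys).
have faceKb : is_face K Kb.
  split; first by move=> x [].
  split.
    move=> x y t [Kx1 hx] [Ky1 hy] ht; split; first exact: Kcvx.
    by move=> i hi; rewrite dotDZ (hx i hi) (hy i hi) !mulr0 addr0.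
  move=> x y t Kx1 Ky1 /andP[t0 t1] [Kw hw].
  have main : forall i, (i <= size ys)%N ->
      forall i', (i' < i)%N -> dot (A^T *m nth 0 ys i') x = 0 /\
                               dot (A^T *m nth 0 ys i') y = 0.
    elim=> [|i IH] hi i' hi'; first by [].
    rewrite ltnS leq_eqVlt in hi'.
    case/orP: hi' => [/eqP ->|hi']; last exact: IH (ltnW hi) _ hi'.
    have [_ [dual _]] := Hys i hi.
    have X0 : 0 <= dot (A^T *m nth 0 ys i) x.
      rewrite dotC; apply: dual; split => // j hj; exact: (IH (ltnW hi) j hj).1.
    have Y0 : 0 <= dot (A^T *m nth 0 ys i) y.
      rewrite dotC; apply: dual; split => // j hj; exact: (IH (ltnW hi) j hj).2.
    have := hw i hi; rewrite dotDZ => E.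
    split; nra.
  split; split => //; move=> i hi; have := main _ (leqnn _) i hi; by case.
have Kbx : Kb xbar.
  split => // i hi.
  rewrite /dot trmx_mul trmxK -mulmxA Axb.
  have [_ [_ [_ hb]]] := Hys i hi.
  by rewrite -hb dotC.
have inj : forall d, @Hs R n K xbar d -> A *m d = 0 -> d = 0.
  move=> d [e [ep h]] Ad.
  have en : `|e| <= e by rewrite ger0_norm // ltW.
  have en' : `|- e| <= e by rewrite normrN ger0_norm // ltW.
  have f1 : feasible_set K A b (xbar + e *: d).
    by split; [exact: h | rewrite mulmxDr -scalemxAr Ad scaler0 addr0].
  have f2 : feasible_set K A b (xbar + (- e) *: d).
    by split; [exact: h | rewrite mulmxDr -scalemxAr Ad scaler0 addr0].
  have ht : 0 < (1/2 : R) < 1 by apply/andP; split; lra.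
  have ex : xbar = 1/2 *: (xbar + e *: d) + (1 - 1/2) *: (xbar + (- e) *: d).
    by apply/matrixP => i j; rewrite !mxE; field.
  have E := xext _ _ _ f1 f2 ht ex.
  apply/matrixP => i j; have := congr1 (fun M : 'cV[R]_n => M i j) E.
  rewrite !mxE /= => E'; nra.
set D := dimS [set A *m x | x in Defs.span Kb].
have DleM : (D <= m)%N by apply/bigmax_leqP => i _; rewrite -ltnS.
rewrite /ips -/Kb -/D subKn //.
apply/bigmax_leqP => d /asboolP [M [rkM colM]].
have key : \rank (A *m M) = d.
  apply: colfree_rank => c hc; apply: (@rank_colfree R n d M rkM); apply: inj; last by rewrite mulmxA.
  apply: (@span_Hs R n K Kcvx xbar Kx (minface K xbar)).
    by move=> y; apply: minface_Hs.
  by exists d, M; split => //; exists c.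
have dm : (d < m.+1)%N by rewrite ltnS -key rank_leq_row.
apply: (leq_trans _ (leq_bigmax_cond (Ordinal dm) _)) => //.
apply/asboolP; exists (A *m M); split => // j.
exists (col j M); last by rewrite !colE mulmxA.
exists 1%N, (col j M); split; last by exists 1%:M; rewrite mulmx1.
by move=> j'; rewrite col_cV; apply: colM.
Qed.
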